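(* Let $(a_i)_{i\ge1}$ be a sequence of mild signature, let $(b_i)_{i\ge1}$ be any sequence of integers, and let $A$ be the associated replacement sequence. If $\beta$ is a real number such that the sequence $\|\beta b_i\|$ does not converge to $0$, then the Weyl sums $x_n=\frac1n\sum_{i=0}^{n-1}e(\beta A(i))$ converge to $0$ as $n\to\infty$.
   Context: $e(x)=e^{2\pi i x}$ and $\|x\|$ is the distance from $x$ to the nearest integer. Greedy representation: given an increasing sequence of positive integers $(a_i)$ with $a_1=1$, the base-$a_i$ representation of $n\ge0$ is obtained by repeatedly subtracting from what remains the largest $a_i$ that is at most what remains (possibly the same $a_i$ several times), until $0$ is reached. Mild signature: $(a_i)$ is an increasing sequence of positive integers with $a_1=1$ such that (1) there is a constant $L$ such that for every $n$, greedily writing $a_n$ as a sum of terms among $a_1,\dots,a_{n-1}$ uses only $a_{n-1},\dots,a_{n-L}$, giving $a_n=c_1a_{n-1}+\dots+c_La_{n-L}$ with integers $c_j\ge0$ (possibly depending on $n$); and (2) there are $r,s>1$ with $ra_n<a_{n+1}<sa_n$ for all $n$. Replacement sequence: if $n=\sum_i m_ia_i$ is the greedy base-$a_i$ representation of $n$, then $A(n)=\sum_i m_ib_i$ (so $A(0)=0$). *)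

(* Defs.v *)
From Stdlib Require Import Reals ZArith Arith.
From Coquelicot Require Import Coquelicot.
Open Scope R_scope.

(* Sequences are 0-indexed in Rocq: a i stands for a_{i+1}, b i for b_{i+1}. *)

Definition e (x : R) : C := (cos (2 * PI * x), sin (2 * PI * x)).

(* ||x|| : distance from x to the nearest integer.  floor x = up x - 1. *)
Definition dist_int (x : R) : R :=
  let f := x - (IZR (up x) - 1) in Rmin f (1 - f).

(* Greedy digits.  [gdigit a K m j] is the number of times a j is used when
   m is written greedily with the terms a 0, ..., a (K-1): the terms are
   processed from the largest index down, each one subtracted as many times
   as possible (m / a k times) from what remains. *)
Fixpoint gdigit (a : nat -> nat) (K m j : nat) : nat :=
  match K with
  | O => O
  | S k => if Nat.eqb j k then m / a k else gdigit a k (m mod a k) j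
  end.

(* Greedy base-(a_i) digit of n at index j (all terms a 0 .. a n are
   available; larger terms exceed n when a is increasing with a 0 = 1). *)
Definition digit (a : nat -> nat) (n j : nat) : nat := gdigit a (S n) n j.

Definition mild_signature (a : nat -> nat) : Prop :=
  a 0%nat = 1%nat /\
  (forall i, (a i < a (S i))%nat) /\
  (* (1): greedily writing a n with a 0..a (n-1) only uses a (n-1),...,a (n-L) *)
  (exists L : nat, forall n j, (j + L < n)%nat -> gdigit a n (a n) j = 0%nat) /\
  (exists r s : R, 1 < r /\ 1 < s /\
     forall n, r * INR (a n) < INR (a (S n)) < s * INR (a n)).

Fixpoint sum_Z (f : nat -> Z) (n : nat) : Z :=
  match n with O => 0%Z | S k => (sum_Z f k + f k)%Z end.

Definition replacement (a : nat -> nat) (b : nat -> Z) (n : nat) : Z :=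
  sum_Z (fun j => (Z.of_nat (digit a n j) * b j)%Z) (S n).

Fixpoint sum_C (f : nat -> C) (n : nat) : C :=
  match n with O => RtoC 0 | S k => Cplus (sum_C f k) (f k) end.

Definition weyl (a : nat -> nat) (b : nat -> Z) (beta : R) (n : nat) : C :=
  Cmult (RtoC (/ INR n)) (sum_C (fun i => e (beta * IZR (replacement a b i))) n).

(* Main.v *)
Require Import Defs.
From Stdlib Require Import Reals ZArith Lia Lra Psatz.
From Coquelicot Require Import Coquelicot.
Open Scope R_scope.


Lemma e_add x y : e (x + y) = Cmult (e x) (e y).
Proof.
  unfold e, Cmult; simpl.
  rewrite Rmult_plus_distr_l, cos_plus, sin_plus. f_equal; ring.
Qed.

Lemma Cmod_e x : Cmod (e x) = 1.
Proof.
  unfold e, Cmod; simpl.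
  replace (cos (2 * PI * x) * (cos (2 * PI * x) * 1) + sin (2 * PI * x) * (sin (2 * PI * x) * 1)) with 1.
  - apply sqrt_1.
  - pose proof (sin2_cos2 (2*PI*x)) as H. unfold Rsqr in H. lra.
Qed.

Lemma sumC_ext f g n : (forall i, (i < n)%nat -> f i = g i) -> sum_C f n = sum_C g n.
Proof.
  induction n; intros H; simpl; auto.
  rewrite IHn by (intros; apply H; lia). rewrite H by lia. auto.
Qed.

Lemma sumC_add f m n : sum_C f (m + n) = Cplus (sum_C f m) (sum_C (fun i => f (m + i)%nat) n).
Proof.
  induction n; simpl.
  - rewrite Nat.add_0_r. unfold Cplus; simpl. destruct (sum_C f m); simpl; f_equal; ring.
  - rewrite Nat.add_succ_r. simpl. rewrite IHn. ring.
Qed.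

Lemma sumC_scal c f n : sum_C (fun i => Cmult c (f i)) n = Cmult c (sum_C f n).
Proof.
  induction n; simpl.
  - destruct c; unfold Cmult, RtoC; simpl. f_equal; ring.
  - rewrite IHn. ring.
Qed.

Lemma sumC_bound f n : (forall i, (i < n)%nat -> Cmod (f i) <= 1) -> Cmod (sum_C f n) <= INR n.
Proof.
  induction n; intros H; cbn [sum_C].
  - rewrite Cmod_0. simpl. lra.
  - eapply Rle_trans. apply Cmod_triangle.
    rewrite S_INR. pose proof (H n ltac:(lia)). pose proof (IHn ltac:(intros; apply H; lia)). lra.
Qed.

Fixpoint sumR (f : nat -> R) (n : nat) : R :=
  match n with O => 0 | S k => sumR f k + f k end.

Lemma sumR_le f g n : (forall i, (i < n)%nat -> f i <= g i) -> sumR f n <= sumR g n.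
Proof.
  induction n; intros H; simpl. lra.
  pose proof (H n ltac:(lia)). pose proof (IHn ltac:(intros; apply H; lia)). lra.
Qed.

Lemma sumR_scal c f n : sumR (fun i => c * f i) n = c * sumR f n.
Proof. induction n; simpl. ring. rewrite IHn. ring. Qed.

Lemma sumR_plus f g n : sumR (fun i => f i + g i) n = sumR f n + sumR g n.
Proof. induction n; simpl. ring. rewrite IHn. ring. Qed.

Lemma sumR_ext f g n : (forall i, (i < n)%nat -> f i = g i) -> sumR f n = sumR g n.
Proof.
  induction n; intros H; simpl; auto.
  rewrite IHn by (intros; apply H; lia). rewrite H by lia. auto.
Qed.

Lemma sumR_nonneg f n : (forall i, (i < n)%nat -> 0 <= f i) -> 0 <= sumR f n.
Proof.
  intros H. replace 0 with (sumR (fun _ => 0) n). apply sumR_le; auto.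
  induction n; simpl; auto. rewrite IHn. ring. intros; apply H; lia.
Qed.

Lemma sumZ_ext f g n : (forall i, (i < n)%nat -> f i = g i) -> sum_Z f n = sum_Z g n.
Proof.
  induction n; intros H; simpl; auto.
  rewrite IHn by (intros; apply H; lia). rewrite H by lia. auto.
Qed.

Lemma sumZ_extend f K p : (forall j, (K <= j)%nat -> f j = 0%Z) -> sum_Z f (K + p) = sum_Z f K.
Proof.
  intros H. induction p; simpl. rewrite Nat.add_0_r; auto.
  rewrite Nat.add_succ_r; simpl. rewrite IHp, H by lia. lia.
Qed.

Section Base.
Variable a : nat -> nat.
Variable b : nat -> Z.
Variable beta : R.
Hypothesis ha0 : a 0%nat = 1%nat.
Hypothesis hinc : forall i, (a i < a (S i))%nat.

Lemma a_ge i : (i + 1 <= a i)%nat.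
Proof. induction i. rewrite ha0; lia. pose proof (hinc i). lia. Qed.

Lemma a_mono i j : (i <= j)%nat -> (a i <= a j)%nat.
Proof. induction 1; auto. pose proof (hinc m). lia. Qed.

Lemma a_pos i : (0 < a i)%nat.
Proof. pose proof (a_ge i). lia. Qed.

Lemma gd_high K m j : (K <= j)%nat -> gdigit a K m j = 0%nat.
Proof.
  revert m. induction K; intros m H; simpl; auto.
  destruct (Nat.eqb_spec j K). lia. apply IHK. lia.
Qed.

Lemma gd_stable K p m j : (m < a K)%nat -> gdigit a (K + p) m j = gdigit a K m j.
Proof.
  intros Hm. induction p. rewrite Nat.add_0_r; auto.
  rewrite Nat.add_succ_r. simpl.
  pose proof (a_mono K (K + p) ltac:(lia)).
  destruct (Nat.eqb_spec j (K + p)).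
  - subst. rewrite gd_high by lia. apply Nat.div_small. lia.
  - rewrite Nat.mod_small by lia. auto.
Qed.

Definition AK K m := sum_Z (fun j => (Z.of_nat (gdigit a K m j) * b j)%Z) K.

Lemma AK_stable K p m : (m < a K)%nat -> AK (K + p) m = AK K m.
Proof.
  intros Hm. unfold AK.
  rewrite (sumZ_ext _ (fun j => (Z.of_nat (gdigit a K m j) * b j)%Z)).
  - apply sumZ_extend. intros j Hj. rewrite gd_high by lia. lia.
  - intros i _. rewrite gd_stable; auto.
Qed.

Lemma repl_AK K m : (m < a K)%nat -> replacement a b m = AK K m.
Proof.
  intros Hm. unfold replacement, digit. fold (AK (S m) m).
  assert (Hs : (m < a (S m))%nat) by (pose proof (a_ge (S m)); lia).
  destruct (Nat.le_gt_cases K (S m)).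
  - replace (S m) with (K + (S m - K))%nat by lia. apply AK_stable; auto.
  - replace K with (S m + (K - S m))%nat by lia. symmetry. apply AK_stable; auto.
Qed.

Lemma AK_step K d u : (u < a K)%nat -> (d * a K + u < a (S K))%nat ->
  AK (S K) (d * a K + u) = (Z.of_nat d * b K + AK K u)%Z.
Proof.
  intros Hu Hd. unfold AK. simpl sum_Z. simpl gdigit.
  rewrite Nat.eqb_refl.
  assert (Hq : ((d * a K + u) / a K = d)%nat).
  { rewrite Nat.add_comm, Nat.div_add by (pose proof (a_pos K); lia). rewrite Nat.div_small by lia. lia. }
  assert (Hr : ((d * a K + u) mod a K = u)%nat).
  { rewrite Nat.add_comm, Nat.Div0.mod_add. apply Nat.mod_small; lia. }
  rewrite Hq. rewrite (sumZ_ext _ (fun j => (Z.of_nat (gdigit a K u j) * b j)%Z)). lia.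
  intros i Hi. destruct (Nat.eqb_spec i K). lia. rewrite Hr. auto.
Qed.

Lemma repl_block K d u : (u < a K)%nat -> (d * a K + u < a (S K))%nat ->
  replacement a b (d * a K + u) = (Z.of_nat d * b K + replacement a b u)%Z.
Proof.
  intros Hu Hd. rewrite (repl_AK (S K)) by auto. rewrite (repl_AK K u) by auto.
  apply AK_step; auto.
Qed.

Definition w n := e (beta * IZR (replacement a b n)).
Definition PS N := sum_C w N.
Definition isum x n := sum_C (fun i => w (x + i)%nat) n.

Lemma isum_split x m n : isum x (m + n) = Cplus (isum x m) (isum (x + m) n).
Proof.
  clear ha0 hinc.
  unfold isum. rewrite sumC_add. f_equal. apply sumC_ext. intros; f_equal; lia.
Qed.

Lemma S_isum N : PS N = isum 0 N.
Proof. unfold PS, isum. apply sumC_ext. auto. Qed.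

Lemma isum_block K d u n : (u + n <= a K)%nat -> (d * a K + u + n <= a (S K))%nat ->
  isum (d * a K + u) n = Cmult (e (beta * IZR (Z.of_nat d * b K))) (isum u n).
Proof.
  intros H1 H2. unfold isum. rewrite <- sumC_scal. apply sumC_ext. intros i Hi.
  unfold w. replace (d * a K + u + i)%nat with (d * a K + (u + i))%nat by lia.
  rewrite repl_block by lia. rewrite <- e_add. f_equal. rewrite plus_IZR. ring.
Qed.

Lemma Cmod_w n : Cmod (w n) = 1.
Proof. apply Cmod_e. Qed.

Lemma isum_triv x n : Cmod (isum x n) <= INR n.
Proof. apply sumC_bound. intros. rewrite Cmod_w. lra. Qed.

End Base.


Section Bounds.
Variable a : nat -> nat.
Variable b : nat -> Z.
Variable beta : R.
Hypothesis ha0 : a 0%nat = 1%nat.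
Hypothesis hinc : forall i, (a i < a (S i))%nat.
Variable lam : R.
Variable J : nat.
Hypothesis hlam : 0 <= lam.
Hypothesis hJ : forall t, (J <= t)%nat -> Cmod (PS a b beta (a t)) <= lam * INR (a t).

Notation isum := (isum a b beta).
Notation PS := (PS a b beta).

Lemma Cmod_block K d u n : (u + n <= a K)%nat -> (d * a K + u + n <= a (S K))%nat ->
  Cmod (isum (d * a K + u) n) = Cmod (isum u n).
Proof.
  intros. rewrite isum_block by auto. rewrite Cmod_mult, Cmod_e. ring.
Qed.

Lemma aligned K (HK : (J <= K)%nat)
  (HP : forall y, (y <= a K)%nat -> Cmod (PS y) <= lam * INR y + INR (a J)) :
  forall len d, (d * a K + len <= a (S K))%nat ->
  Cmod (isum (d * a K) len) <= lam * INR len + INR (a J).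
Proof.
  intros len. induction len as [len IH] using (well_founded_induction lt_wf).
  intros d Hd.
  destruct (Nat.le_gt_cases len (a K)) as [Hl | Hl].
  - replace (d * a K)%nat with (d * a K + 0)%nat by lia.
    rewrite (Cmod_block K d 0 len) by lia. rewrite <- S_isum. apply HP; auto.
  - replace len with (a K + (len - a K))%nat by lia.
    rewrite isum_split. eapply Rle_trans. apply Cmod_triangle.
    replace (d * a K + a K)%nat with (S d * a K)%nat by (simpl; lia).
    assert (H1 : Cmod (isum (d * a K) (a K)) <= lam * INR (a K)).
    { replace (d * a K)%nat with (d * a K + 0)%nat by lia.
      rewrite (Cmod_block K d 0 (a K)) by lia. rewrite <- S_isum. apply hJ; auto. }
    assert (H2 := IH (len - a K)%nat ltac:(pose proof (a_pos a ha0 hinc K); lia) (S d) ltac:(simpl; lia)).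
    rewrite plus_INR. lra.
Qed.

Lemma prefix_bound K : (J <= K)%nat -> forall y, (y <= a K)%nat -> Cmod (PS y) <= lam * INR y + INR (a J).
Proof.
  intros HK. induction HK as [|K HK IH]; intros y Hy.
  - rewrite S_isum. eapply Rle_trans. apply isum_triv.
    apply le_INR in Hy. pose proof (pos_INR y). nra.
  - rewrite S_isum. replace 0%nat with (0 * a K)%nat by lia.
    apply aligned; auto; simpl; lia.
Qed.

Lemma general_bound K : (J <= K)%nat -> forall x n, (x + n <= a K)%nat ->
  Cmod (isum x n) <= lam * INR n + INR (S K) * INR (a J).
Proof.
  intros HK. induction HK as [|K HK IH]; intros x n Hxn.
  - eapply Rle_trans. apply isum_triv.
    assert (INR n <= INR (a J)) by (apply le_INR; lia).
    pose proof (pos_INR n). rewrite S_INR. pose proof (pos_INR J). pose proof (pos_INR (a J)). nra.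
  - assert (Hq : (0 < a K)%nat) by apply (a_pos a ha0 hinc).
    pose proof (Nat.div_mod x (a K) ltac:(lia)) as Hx.
    pose proof (Nat.mod_upper_bound x (a K) ltac:(lia)) as Hu.
    set (d := (x / (a K))%nat) in *. set (u := (x mod (a K))%nat) in *.
    assert (HSK : INR (S (S K)) = INR (S K) + 1) by apply S_INR.
    pose proof (pos_INR (a J)).
    destruct (Nat.le_gt_cases (u + n) (a K)) as [Hl | Hl].
    + replace x with (d * (a K) + u)%nat by lia.
      rewrite (Cmod_block K d u n) by lia.
      eapply Rle_trans. apply IH. lia. nra.
    + replace n with (((a K) - u) + (n - ((a K) - u)))%nat by lia.
      rewrite isum_split. eapply Rle_trans. apply Cmod_triangle.
      assert (H1 : Cmod (isum x ((a K) - u)) <= lam * INR ((a K) - u) + INR (S K) * INR (a J)).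
      { replace x with (d * (a K) + u)%nat by lia.
        rewrite (Cmod_block K d u ((a K) - u)) by lia.
        apply IH. lia. }
      assert (H2 : Cmod (isum (x + ((a K) - u)) (n - ((a K) - u))) <= lam * INR (n - ((a K) - u)) + INR (a J)).
      { replace (x + ((a K) - u))%nat with (S d * (a K))%nat by (simpl; lia).
        apply aligned; auto. all: try (intros y Hy; apply (prefix_bound K); auto). all: try (simpl; lia). }
      rewrite plus_INR. nra.
Qed.

End Bounds.


Section Decomp.
Variable a : nat -> nat.
Variable b : nat -> Z.
Variable beta : R.
Hypothesis ha0 : a 0%nat = 1%nat.
Hypothesis hinc : forall i, (a i < a (S i))%nat.

Notation isum := (isum a b beta).
Notation PS := (PS a b beta).

Lemma sumR_S f n : sumR f (S n) = sumR f n + f n.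
Proof. reflexivity. Qed.

Lemma gdigit_S K m j : gdigit a (S K) m j = if Nat.eqb j K then (m / a K)%nat else gdigit a K (m mod a K) j.
Proof. reflexivity. Qed.

Lemma digit_sum K y :
  sumR (fun i => INR (gdigit a (S K) y i) * INR (a i)) (S K) = INR y.
Proof.
  revert y. induction K; intros y.
  - cbn [sumR gdigit Nat.eqb]. rewrite ha0, Nat.div_1_r. change (INR 1) with 1. ring.
  - rewrite sumR_S. rewrite (sumR_ext _ (fun i => INR (gdigit a (S K) (y mod a (S K)) i) * INR (a i))).
    + rewrite IHK. rewrite (gdigit_S (S K)). rewrite Nat.eqb_refl.
      pose proof (Nat.div_mod y (a (S K)) ltac:(pose proof (a_pos a ha0 hinc (S K)); lia)) as Hy.
      rewrite Hy at 3. rewrite plus_INR, mult_INR. ring.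
    + intros i Hi. rewrite (gdigit_S (S K)). destruct (Nat.eqb_spec i (S K)). lia. auto.
Qed.

Lemma Cmod_PS1 : Cmod (PS 1) = 1.
Proof.
  unfold PS. simpl. replace (Cplus (RtoC 0) (w a b beta 0)) with (w a b beta 0).
  apply Cmod_w. destruct (w a b beta 0); unfold Cplus, RtoC; simpl; f_equal; ring.
Qed.

Lemma blocks_bound K d : (d * a K <= a (S K))%nat ->
  Cmod (isum 0 (d * a K)) <= INR d * Cmod (PS (a K)).
Proof.
  induction d; intros Hd.
  - simpl. unfold isum. simpl. rewrite Cmod_0. lra.
  - replace (S d * a K)%nat with (d * a K + a K)%nat by (simpl; lia).
    rewrite isum_split. eapply Rle_trans. apply Cmod_triangle.
    replace (0 + d * a K)%nat with (d * a K + 0)%nat by lia.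
    rewrite (Cmod_block a b beta ha0 hinc K d 0 (a K)) by (simpl in Hd; lia).
    rewrite <- (S_isum a b beta (a K)). rewrite S_INR.
    assert (Hd' : (d * a K <= a (S K))%nat) by (simpl in Hd; lia).
    specialize (IHd Hd'). lra.
Qed.

Lemma decomp K y : (y <= a (S K))%nat ->
  Cmod (PS y) <= sumR (fun i => INR (gdigit a (S K) y i) * Cmod (PS (a i))) (S K).
Proof.
  revert y. induction K; intros y Hy.
  - cbn [sumR gdigit Nat.eqb]. rewrite ha0, Nat.div_1_r, Cmod_PS1. rewrite S_isum.
    eapply Rle_trans. apply isum_triv. lra.
  - rewrite sumR_S. rewrite (sumR_ext _ (fun i => INR (gdigit a (S K) (y mod a (S K)) i) * Cmod (PS (a i)))).
    + rewrite (gdigit_S (S K)). rewrite Nat.eqb_refl.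
      assert (Hq : (0 < a (S K))%nat) by apply (a_pos a ha0 hinc).
      pose proof (Nat.div_mod y (a (S K)) ltac:(lia)) as Hyd.
      pose proof (Nat.mod_upper_bound y (a (S K)) ltac:(lia)) as Hu.
      set (d := (y / a (S K))%nat) in *. set (u := (y mod a (S K))%nat) in *.
      assert (IH := IHK u ltac:(lia)).
      assert (HB := blocks_bound (S K) d ltac:(lia)).
      rewrite S_isum. replace y with (d * a (S K) + u)%nat by lia. rewrite isum_split.
      eapply Rle_trans. apply Cmod_triangle.
      replace (0 + d * a (S K))%nat with (d * a (S K) + 0)%nat by lia.
      rewrite (Cmod_block a b beta ha0 hinc (S K) d 0 u) by lia.
      rewrite <- (S_isum a b beta u). lra.
    + intros i Hi. rewrite (gdigit_S (S K)). destruct (Nat.eqb_spec i (S K)). lia. auto.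
Qed.

End Decomp.


Section Save.
Variable a : nat -> nat.
Variable b : nat -> Z.
Variable beta : R.
Hypothesis ha0 : a 0%nat = 1%nat.
Hypothesis hinc : forall i, (a i < a (S i))%nat.
Variable lam : R.
Variable J : nat.
Hypothesis hlam : 0 <= lam.
Hypothesis hJ : forall t, (J <= t)%nat -> Cmod (PS a b beta (a t)) <= lam * INR (a t).

Notation isum := (isum a b beta).
Notation PS := (PS a b beta).

Lemma isum_one K n : (n <= a K)%nat -> (a K + n <= a (S K))%nat ->
  isum (a K) n = Cmult (e (beta * IZR (b K))) (PS n).
Proof.
  intros H1 H2. replace (a K) with (1 * a K + 0)%nat at 1 by lia.
  rewrite isum_block by (auto; lia). rewrite S_isum. f_equal. f_equal. f_equal. f_equal. lia.
Qed.

Lemma saving k delta : 0 <= delta -> (J <= k)%nat ->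
  Cmod (Cplus (RtoC 1) (e (beta * IZR (b k)))) <= 2 - delta ->
  Cmod (PS (a (S k))) <= lam * INR (a (S k)) - delta * lam * Rmin (INR (a k)) (INR (a (S k) - a k))
     + INR (k + 3) * INR (a J).
Proof.
  intros Hd0 Hk Hd.
  set (E := e (beta * IZR (b k))) in *.
  assert (Hpos : 0 <= Cmod (Cplus (RtoC 1) E)) by apply Cmod_ge_0.
  pose proof (hinc k) as Hak.
  pose proof (pos_INR (a J)) as HaJ.
  pose proof (pos_INR k) as Hk0.
  assert (HJk : INR (a J) <= INR (a k)) by (apply le_INR, a_mono; auto).
  destruct (Nat.le_gt_cases (2 * a k) (a (S k))) as [HA | HB].
  -
    assert (Hsplit : PS (a (S k)) = Cplus (Cmult (Cplus (RtoC 1) E) (PS (a k)))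
                                         (isum (2 * a k) (a (S k) - 2 * a k))).
    { rewrite S_isum. replace (a (S k)) with (a k + a k + (a (S k) - 2 * a k))%nat at 1 by lia.
      rewrite !isum_split. rewrite !Nat.add_0_l. rewrite (isum_one k (a k)) by lia.
      replace (a k + a k)%nat with (2 * a k)%nat by lia. rewrite <- S_isum.
      unfold E. ring. }
    rewrite Hsplit. eapply Rle_trans. apply Cmod_triangle. rewrite Cmod_mult.
    assert (H1 := hJ k Hk).
    assert (H2 : Cmod (isum (2 * a k) (a (S k) - 2 * a k)) <= lam * INR (a (S k) - 2 * a k) + INR (a J)).
    { apply (aligned a b beta ha0 hinc lam J hJ k Hk).
      - intros y Hy. apply (prefix_bound a b beta ha0 hinc lam J hlam hJ k Hk); auto.
      - lia. }
    rewrite minus_INR in H2 by lia. rewrite mult_INR in H2. simpl (INR 2) in H2.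
    assert (Hm : Rmin (INR (a k)) (INR (a (S k) - a k)) <= INR (a k)) by apply Rmin_l.
    assert (Hm0 : 0 <= Rmin (INR (a k)) (INR (a (S k) - a k))) by (apply Rmin_glb; apply pos_INR).
    assert (Hc : 0 <= Cmod (PS (a k))) by apply Cmod_ge_0.
    assert (Hdl : delta <= 2) by lra.
    assert (HH : Cmod (Cplus (RtoC 1) E) * Cmod (PS (a k)) <= (2 - delta) * (lam * INR (a k))).
    { apply Rmult_le_compat; auto. }
    rewrite plus_INR. simpl (INR 3).
    assert (delta * lam * Rmin (INR (a k)) (INR (a (S k) - a k)) <= delta * lam * INR (a k)).
    { apply Rmult_le_compat_l; nra. }
    nra.
  -
    set (R0 := (a (S k) - a k)%nat).
    assert (Hsplit : PS (a (S k)) = Cplus (Cmult (Cplus (RtoC 1) E) (PS R0)) (isum R0 (a k - R0))).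
    { rewrite S_isum. replace (a (S k)) with (R0 + (a k - R0) + R0)%nat at 1 by lia.
      rewrite !isum_split. rewrite !Nat.add_0_l. replace (R0 + (a k - R0))%nat with (a k) by lia.
      rewrite (isum_one k R0) by lia. rewrite <- S_isum.
      unfold E. ring. }
    rewrite Hsplit. eapply Rle_trans. apply Cmod_triangle. rewrite Cmod_mult.
    assert (H1 : Cmod (PS R0) <= lam * INR R0 + INR (a J)).
    { apply (prefix_bound a b beta ha0 hinc lam J hlam hJ k Hk). lia. }
    assert (H2 : Cmod (isum R0 (a k - R0)) <= lam * INR (a k - R0) + INR (S k) * INR (a J)).
    { apply (general_bound a b beta ha0 hinc lam J hlam hJ k Hk). lia. }
    rewrite minus_INR in H2 by lia.
    assert (Hm : Rmin (INR (a k)) (INR R0) <= INR R0) by apply Rmin_r.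
    assert (Hm0 : 0 <= Rmin (INR (a k)) (INR R0)) by (apply Rmin_glb; apply pos_INR).
    assert (Hc : 0 <= Cmod (PS R0)) by apply Cmod_ge_0.
    assert (Hdl : delta <= 2) by lra.
    assert (HH : Cmod (Cplus (RtoC 1) E) * Cmod (PS R0) <= (2 - delta) * (lam * INR R0 + INR (a J))).
    { apply Rmult_le_compat; auto. }
    assert (HR0 : INR (a (S k)) = INR (a k) + INR R0) by (unfold R0; rewrite <- plus_INR; f_equal; lia).
    rewrite plus_INR. simpl (INR 3). rewrite S_INR in H2.
    assert (delta * lam * Rmin (INR (a k)) (INR R0) <= delta * lam * INR R0).
    { apply Rmult_le_compat_l; nra. }
    assert (delta * INR (a J) >= 0) by nra.
    nra.
Qed.

End Save.


Section Propag.
Variable a : nat -> nat.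
Variable b : nat -> Z.
Variable beta : R.
Hypothesis ha0 : a 0%nat = 1%nat.
Hypothesis hinc : forall i, (a i < a (S i))%nat.
Variable L : nat.
Hypothesis hL : forall n j, (j + L < n)%nat -> gdigit a n (a n) j = 0%nat.
Variable s : R.
Hypothesis hs : 1 < s.
Hypothesis hgrow : forall n, INR (a (S n)) < s * INR (a n).
Variable lam : R.
Variable J : nat.
Hypothesis hlam : 0 <= lam.
Hypothesis hJ : forall t, (J <= t)%nat -> Cmod (PS a b beta (a t)) <= lam * INR (a t).

Notation PS := (PS a b beta).

Lemma g_nz t i : gdigit a t (a t) i <> 0%nat -> (t <= i + L)%nat.
Proof. intros H. destruct (Nat.le_gt_cases t (i + L)); auto. exfalso. apply H, hL. lia. Qed.

Lemma g_top K : (1 <= gdigit a (S K) (a (S K)) K)%nat.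
Proof.
  rewrite gdigit_S, Nat.eqb_refl. pose proof (hinc K). pose proof (a_pos a ha0 hinc K).
  apply Nat.div_le_lower_bound; lia.
Qed.

Lemma L_pos : (1 <= L)%nat.
Proof.
  destruct L eqn:EL; [|lia]. exfalso.
  assert (H := hL 1 0 ltac:(lia)). pose proof (g_top 0) as G. lia.
Qed.

Lemma prop_gen t (c : nat -> R) : (1 <= t)%nat ->
  (forall i, (i < t)%nat -> gdigit a t (a t) i <> 0%nat -> Cmod (PS (a i)) <= lam * INR (a i) - c i) ->
  Cmod (PS (a t)) <= lam * INR (a t) - sumR (fun i => INR (gdigit a t (a t) i) * c i) t.
Proof.
  intros Ht H. destruct t as [|K]. lia.
  eapply Rle_trans. apply (decomp a b beta ha0 hinc K (a (S K))); lia.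
  eapply Rle_trans. apply (sumR_le _ (fun i => INR (gdigit a (S K) (a (S K)) i) * (lam * INR (a i) - c i))).
  - intros i Hi. destruct (Nat.eq_dec (gdigit a (S K) (a (S K)) i) 0) as [E|E].
    + rewrite E. simpl. lra.
    + apply Rmult_le_compat_l. apply pos_INR. apply H; auto.
  - rewrite (sumR_ext _ (fun i => lam * (INR (gdigit a (S K) (a (S K)) i) * INR (a i)) + (-1) * (INR (gdigit a (S K) (a (S K)) i) * c i))).
    + rewrite sumR_plus, sumR_scal, sumR_scal, digit_sum by auto. lra.
    + intros; ring.
Qed.

Lemma sumR_zero n : sumR (fun _ => 0) n = 0.
Proof. induction n; simpl; auto. rewrite IHn. ring. Qed.

Lemma mono_step K : (J + L <= S K)%nat -> (J <= K)%nat ->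
  lam * INR (a K) - Cmod (PS (a K)) <= lam * INR (a (S K)) - Cmod (PS (a (S K))).
Proof.
  intros H1 H2.
  set (dK := lam * INR (a K) - Cmod (PS (a K))).
  assert (HdK : 0 <= dK) by (unfold dK; pose proof (hJ K H2); lra).
  assert (HP := prop_gen (S K) (fun i => if Nat.eqb i K then dK else 0) ltac:(lia)).
  assert (HQ : Cmod (PS (a (S K))) <= lam * INR (a (S K)) -
     sumR (fun i => INR (gdigit a (S K) (a (S K)) i) * (if Nat.eqb i K then dK else 0)) (S K)).
  { apply HP. intros i Hi Hg. destruct (Nat.eqb_spec i K).
    - subst. unfold dK. lra.
    - pose proof (g_nz _ _ Hg). pose proof (hJ i ltac:(lia)). lra. }
  rewrite sumR_S in HQ. rewrite Nat.eqb_refl in HQ.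
  rewrite (sumR_ext _ (fun _ => 0)) in HQ.
  - rewrite sumR_zero in HQ.
    pose proof (g_top K) as Hg. apply le_INR in Hg. simpl (INR 1) in Hg. fold dK. nra.
  - intros i Hi. destruct (Nat.eqb_spec i K). lia. ring.
Qed.

Lemma chain p : (J + L <= p)%nat -> (J < p)%nat -> forall m,
  lam * INR (a p) - Cmod (PS (a p)) <= lam * INR (a (p + m)) - Cmod (PS (a (p + m))).
Proof.
  intros H1 H2 m. induction m. rewrite Nat.add_0_r. lra.
  eapply Rle_trans. apply IHm. rewrite Nat.add_succ_r. apply mono_step; lia.
Qed.

Lemma growth_s p m : INR (a (p + m)) <= s ^ m * INR (a p).
Proof.
  induction m. rewrite Nat.add_0_r. simpl. lra.
  rewrite Nat.add_succ_r. pose proof (hgrow (p + m)). simpl. nra.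
Qed.

Lemma window p g : (J + L <= p)%nat ->
  (forall t, (p <= t < p + L)%nat -> Cmod (PS (a t)) <= (lam - g) * INR (a t)) ->
  forall t, (p <= t)%nat -> Cmod (PS (a t)) <= (lam - g) * INR (a t).
Proof.
  intros Hp Hearly t. pose proof L_pos. induction t as [t IH] using (well_founded_induction lt_wf). intros Ht.
  destruct (Nat.lt_ge_cases t (p + L)). apply Hearly; lia.
  assert (HP := prop_gen t (fun i => g * INR (a i)) ltac:(pose proof L_pos; lia)).
  eapply Rle_trans. apply HP.
  - intros i Hi Hg. pose proof (g_nz _ _ Hg). pose proof (IH i Hi ltac:(lia)). lra.
  - rewrite (sumR_ext _ (fun i => g * (INR (gdigit a t (a t) i) * INR (a i)))) by (intros; ring).
    rewrite sumR_scal. destruct t as [|K]. lia. rewrite digit_sum by auto. lra.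
Qed.

Lemma contraction p D : (J + L <= p)%nat -> (J < p)%nat -> 0 <= D ->
  Cmod (PS (a p)) <= (lam - D) * INR (a p) ->
  forall t, (p <= t)%nat -> Cmod (PS (a t)) <= (lam - D / s ^ L) * INR (a t).
Proof.
  intros H1 H2 HD Hsave. apply window; auto.
  intros t Ht. replace t with (p + (t - p))%nat by lia.
  pose proof (chain p H1 H2 (t - p)) as Hc.
  pose proof (growth_s p (t - p)) as Hg.
  assert (Hsm : s ^ (t - p) <= s ^ L) by (apply Rle_pow; lia || lra).
  assert (HsL : 0 < s ^ L) by (apply pow_lt; lra).
  pose proof (pos_INR (a p)). pose proof (pos_INR (a (p + (t - p)))).
  assert (D / s ^ L * INR (a (p + (t - p))) <= D * INR (a p)).
  { unfold Rdiv. rewrite Rmult_assoc. apply Rmult_le_compat_l; auto.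
    apply (Rmult_le_reg_l (s ^ L)); auto. rewrite <- Rmult_assoc, Rinv_r by lra. nra. }
  nra.
Qed.

End Propag.


Lemma cos_int x z : cos (x + 2 * PI * IZR z) = cos x.
Proof.
  rewrite cos_plus.
  assert (H1 : sin (2 * PI * IZR z) = 0).
  { apply sin_eq_0_1. exists (2 * z)%Z. rewrite mult_IZR. simpl. ring. }
  assert (H2 : sin (PI * IZR z) = 0).
  { apply sin_eq_0_1. exists z. ring. }
  assert (H3 : cos (2 * PI * IZR z) = 1).
  { replace (2 * PI * IZR z) with (2 * (PI * IZR z)) by ring. rewrite cos_2a_sin, H2. ring. }
  rewrite H1, H3. ring.
Qed.

Lemma cos_2pi_minus y : cos (2 * PI - y) = cos y.
Proof.
  unfold Rminus. rewrite cos_plus, cos_2PI, sin_2PI, cos_neg. ring.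
Qed.

Lemma dist_int_cos th eps : 0 < eps -> eps <= dist_int th -> cos (2 * PI * th) <= cos (2 * PI * eps).
Proof.
  intros He Hd. unfold dist_int in Hd.
  destruct (archimed th) as [Hu1 Hu2].
  set (f := th - (IZR (up th) - 1)) in *.
  assert (Hf1 : eps <= f) by (eapply Rle_trans; [exact Hd | apply Rmin_l]).
  assert (Hf2 : eps <= 1 - f) by (eapply Rle_trans; [exact Hd | apply Rmin_r]).
  replace (2 * PI * th) with (2 * PI * f + 2 * PI * IZR (up th - 1)).
  2: { unfold f. rewrite minus_IZR. simpl. ring. }
  rewrite cos_int. pose proof PI_RGT_0.
  destruct (Rle_dec f (1/2)).
  - apply cos_decr_1; nra.
  - rewrite <- cos_2pi_minus. apply cos_decr_1; nra.
Qed.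

Lemma Cmod_1e th : Cmod (Cplus (RtoC 1) (e th)) = sqrt (2 + 2 * cos (2 * PI * th)).
Proof.
  unfold Cmod, e, Cplus, RtoC; simpl. f_equal.
  pose proof (sin2_cos2 (2 * PI * th)) as H. unfold Rsqr in H. nra.
Qed.

Lemma delta_spec eps : 0 < eps <= 1/2 ->
  0 < 2 - sqrt (2 + 2 * cos (2 * PI * eps)).
Proof.
  intros He. pose proof PI_RGT_0.
  assert (Hc : cos (2 * PI * eps) < 1).
  { rewrite <- cos_0. apply cos_decreasing_1; nra. }
  pose proof (COS_bound (2 * PI * eps)).
  assert (Hs : sqrt (2 + 2 * cos (2 * PI * eps)) < sqrt (2 * 2)).
  { apply sqrt_lt_1_alt. lra. }
  rewrite sqrt_square in Hs by lra. lra.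
Qed.

Lemma dist_int_le th : dist_int th <= 1/2.
Proof.
  unfold dist_int. set (f := th - (IZR (up th) - 1)).
  destruct (Rle_dec f (1/2)).
  - eapply Rle_trans. apply Rmin_l. auto.
  - eapply Rle_trans. apply Rmin_r. lra.
Qed.

Lemma dist_int_nonneg th : 0 <= dist_int th.
Proof.
  unfold dist_int. destruct (archimed th). apply Rmin_glb; lra.
Qed.

Lemma savings_from_dist eps th : 0 < eps -> eps <= dist_int th ->
  Cmod (Cplus (RtoC 1) (e th)) <= 2 - (2 - sqrt (2 + 2 * cos (2 * PI * eps))).
Proof.
  intros He Hd. rewrite Cmod_1e. replace (2 - (2 - sqrt (2 + 2 * cos (2 * PI * eps)))) with (sqrt (2 + 2 * cos (2 * PI * eps))) by ring.
  apply sqrt_le_1_alt. pose proof (dist_int_cos th eps He Hd). lra.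
Qed.

Lemma not_lim_exists (u : nat -> R) : ~ is_lim_seq u 0 -> (forall n, 0 <= u n) ->
  exists eps, 0 < eps /\ forall N, exists k, (N <= k)%nat /\ eps <= u k.
Proof.
  intros Hn Hpos. apply Classical_Prop.NNPP. intros Hc. apply Hn.
  apply is_lim_seq_spec. intros eps.
  apply Classical_Prop.NNPP. intros He. apply Hc. exists eps. split. apply cond_pos.
  intros N. apply Classical_Prop.NNPP. intros Hk. apply He. exists N. intros n Hn'.
  destruct (Rlt_dec (u n) eps).
  - rewrite Rminus_0_r, Rabs_pos_eq by auto. auto.
  - exfalso. apply Hk. exists n. split; auto. lra.
Qed.


Section Final.
Variable a : nat -> nat.
Variable b : nat -> Z.
Variable beta : R.
Hypothesis ha0 : a 0%nat = 1%nat.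
Hypothesis hinc : forall i, (a i < a (S i))%nat.
Variable L : nat.
Hypothesis hL : forall n j, (j + L < n)%nat -> gdigit a n (a n) j = 0%nat.
Variables r s : R.
Hypothesis hr : 1 < r.
Hypothesis hs : 1 < s.
Hypothesis hrs : forall n, r * INR (a n) < INR (a (S n)) < s * INR (a n).
Variable delta : R.
Hypothesis hdelta : 0 < delta.
Hypothesis hsav : forall N, exists k, (N <= k)%nat /\ Cmod (Cplus (RtoC 1) (e (beta * IZR (b k)))) <= 2 - delta.

Notation PS := (PS a b beta).

Definition m0 := Rmin 1 (r - 1) / s.
Definition kappa := delta * m0 / 2 / s ^ L.
Definition rho := 1 - kappa.

Lemma a_lower n : r ^ n <= INR (a n).
Proof.
  induction n. simpl. rewrite ha0. simpl. lra.
  simpl. pose proof (hrs n). nra.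
Qed.

Lemma bern q n : 1 < q -> 1 + INR n * (q - 1) <= q ^ n.
Proof.
  intros Hq. induction n. simpl. lra.
  rewrite S_INR. simpl. pose proof (pos_INR n).
  assert (q * (1 + INR n * (q - 1)) <= q * q ^ n) by (apply Rmult_le_compat_l; lra).
  assert (0 <= INR n * (q - 1) * (q - 1)) by (apply Rmult_le_pos; [apply Rmult_le_pos|]; lra).
  nra.
Qed.

Lemma lin_small c : 0 < c -> exists N, forall k, (N <= k)%nat -> INR (k + 3) <= c * INR (a (S k)).
Proof.
  intros Hc.
  set (q := sqrt r).
  assert (Hq1 : 1 < q) by (unfold q; rewrite <- sqrt_1; apply sqrt_lt_1_alt; lra).
  assert (Hqq : q * q = r) by (unfold q; apply sqrt_sqrt; lra).
  set (h := q - 1). assert (Hh : 0 < h) by (unfold h; lra).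
  destruct (archimed_cor1 (c * h * h / 4)) as [N [HN HN0]].
  { apply Rdiv_lt_0_compat; [|lra]. repeat apply Rmult_lt_0_compat; lra. }
  exists N. intros k Hk.
  assert (HkN : INR N <= INR k) by (apply le_INR; auto).
  assert (HN1 : 1 <= INR N) by (apply (le_INR 1); lia).
  assert (H4 : 4 < INR N * (c * h * h)).
  { apply (Rmult_lt_compat_l (INR N)) in HN; [|lra]. rewrite Rinv_r in HN by lra. nra. }
  pose proof (bern q k Hq1) as Hb. fold h in Hb.
  assert (Hrk : r ^ k = q ^ k * q ^ k) by (rewrite <- Hqq; apply Rpow_mult_distr).
  pose proof (a_lower (S k)) as Ha. simpl in Ha.
  assert (Hrk1 : r ^ k <= r * r ^ k) by (pose proof (pow_le r k ltac:(lra)); nra).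
  rewrite plus_INR. simpl (INR 3).
  assert (Hqk : 0 <= 1 + INR k * h) by (pose proof (pos_INR k); nra).
  assert (Hsq : (1 + INR k * h) * (1 + INR k * h) <= q ^ k * q ^ k) by (apply Rmult_le_compat; lra).
  assert (HcK : 4 * INR k <= c * h * h * INR k * INR k) by nra.
  nra.
Qed.

Lemma min_bound k : m0 * INR (a (S k)) <= Rmin (INR (a k)) (INR (a (S k) - a k)).
Proof.
  pose proof (hrs k) as [H1 H2].
  assert (Hlt : (a k < a (S k))%nat) by apply hinc.
  rewrite minus_INR by lia.
  assert (Hm : s * (m0 * INR (a (S k))) = Rmin 1 (r - 1) * INR (a (S k))) by (unfold m0; field; lra).
  pose proof (Rmin_l 1 (r - 1)). pose proof (Rmin_r 1 (r - 1)).
  pose proof (pos_INR (a k)). pose proof (pos_INR (a (S k))).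
  assert (0 <= Rmin 1 (r - 1)) by (apply Rmin_glb; lra).
  apply Rmin_glb.
  - apply (Rmult_le_reg_l s); [lra|]. rewrite Hm. nra.
  - apply (Rmult_le_reg_l s); [lra|]. rewrite Hm. nra.
Qed.

Lemma delta_le2 : delta <= 2.
Proof. destruct (hsav 0) as [k [_ Hk]]. pose proof (Cmod_ge_0 (Cplus (RtoC 1) (e (beta * IZR (b k))))). lra. Qed.

Lemma m0_bounds : 0 < m0 <= 1.
Proof.
  unfold m0. assert (0 < Rmin 1 (r - 1)) by (apply Rmin_glb_lt; lra).
  pose proof (Rmin_l 1 (r - 1)). split.
  - apply Rdiv_lt_0_compat; lra.
  - apply (Rmult_le_reg_l s); [lra|]. field_simplify; lra.
Qed.

Lemma kappa_bounds : 0 < kappa <= 1.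
Proof.
  unfold kappa. pose proof m0_bounds. pose proof delta_le2.
  assert (HsL : 1 <= s ^ L) by (apply pow_R1_Rle; lra).
  split.
  - apply Rdiv_lt_0_compat; [|lra]. apply Rdiv_lt_0_compat; nra.
  - apply (Rmult_le_reg_l (s ^ L)); [lra|]. field_simplify; nra.
Qed.

Lemma contract lam J : 0 <= lam ->
  (forall t, (J <= t)%nat -> Cmod (PS (a t)) <= lam * INR (a t)) ->
  exists J', forall t, (J' <= t)%nat -> Cmod (PS (a t)) <= rho * lam * INR (a t).
Proof.
  intros Hl HJ. destruct (Req_dec lam 0) as [E|E].
  - exists J. intros t Ht. rewrite E, Rmult_0_r. rewrite E in HJ. auto.
  - assert (Hl' : 0 < lam) by lra.
    pose proof m0_bounds. pose proof (pos_INR (a J)).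
    assert (HaJ : 0 < INR (a J)) by (apply lt_0_INR, (a_pos a ha0 hinc)).
    destruct (lin_small (delta * m0 * lam / 2 / INR (a J))) as [N HN].
    { apply Rdiv_lt_0_compat; [|lra]. apply Rdiv_lt_0_compat; [|lra]. apply Rmult_lt_0_compat; nra. }
    destruct (hsav (N + J + L)) as [k [Hk Hsk]].
    assert (Hsave := saving a b beta ha0 hinc lam J Hl HJ k delta ltac:(lra) ltac:(lia) Hsk).
    assert (Herr := HN k ltac:(lia)).
    assert (Hmin := min_bound k).
    set (D := delta * m0 * lam / 2).
    assert (HD : 0 <= D) by (unfold D; apply Rmult_le_pos; [|lra]; apply Rmult_le_pos; nra).
    assert (Hsave2 : Cmod (PS (a (S k))) <= (lam - D) * INR (a (S k))).
    { assert (E1 : INR (k + 3) * INR (a J) <= D * INR (a (S k))).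
      { unfold D. replace (delta * m0 * lam / 2) with (delta * m0 * lam / 2 / INR (a J) * INR (a J)) by (field; lra).
        pose proof (pos_INR (k + 3)). nra. }
      assert (E2 : delta * lam * (m0 * INR (a (S k))) <= delta * lam * Rmin (INR (a k)) (INR (a (S k) - a k))).
      { apply Rmult_le_compat_l; nra. }
      unfold D in *. nra. }
    assert (hgrow : forall n, INR (a (S n)) < s * INR (a n)) by (intros n; apply hrs).
    pose proof (contraction a b beta ha0 hinc L hL s hs hgrow lam J HJ (S k) D ltac:(lia) ltac:(lia) HD Hsave2) as Hc.
    exists (S k). intros t Ht. eapply Rle_trans. apply Hc; auto.
    right. unfold rho, kappa, D. field. pose proof (pow_lt s L ltac:(lra)). lra.
Qed.

Lemma iterate n : exists J, forall t, (J <= t)%nat -> Cmod (PS (a t)) <= rho ^ n * INR (a t).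
Proof.
  induction n.
  - exists 0%nat. intros t _. simpl. rewrite Rmult_1_l. rewrite S_isum. apply isum_triv.
  - destruct IHn as [J HJ]. pose proof kappa_bounds.
    assert (0 <= rho ^ n) by (apply pow_le; unfold rho; lra).
    destruct (contract (rho ^ n) J) as [J' HJ']; auto.
    exists J'. intros t Ht. simpl. apply HJ'; auto.
Qed.

Lemma ratio_small eta : 0 < eta -> exists J, forall t, (J <= t)%nat -> Cmod (PS (a t)) <= eta * INR (a t).
Proof.
  intros He. pose proof kappa_bounds.
  destruct (pow_lt_1_zero rho ltac:(unfold rho; rewrite Rabs_pos_eq; lra) eta He) as [n Hn].
  destruct (iterate n) as [J HJ]. exists J. intros t Ht.
  eapply Rle_trans. apply HJ; auto. apply Rmult_le_compat_r. apply pos_INR.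
  specialize (Hn n ltac:(lia)). rewrite Rabs_pos_eq in Hn. lra. apply pow_le. unfold rho; lra.
Qed.

Lemma final_bound eta : 0 < eta -> exists M, forall N, (M <= N)%nat -> Cmod (PS N) <= eta * INR N.
Proof.
  intros He. destruct (ratio_small (eta / 2)) as [J HJ]. lra.
  assert (HaJ : 0 < INR (a J)) by (apply lt_0_INR, (a_pos a ha0 hinc)).
  destruct (archimed_cor1 (eta / 2 / INR (a J))) as [M [HM HM0]].
  { apply Rdiv_lt_0_compat; lra. }
  exists M. intros N HN.
  assert (HP := prefix_bound a b beta ha0 hinc (eta / 2) J ltac:(lra) HJ (Nat.max N J) ltac:(lia) N).
  assert (HNa : (N <= a (Nat.max N J))%nat).
  { pose proof (a_ge a ha0 hinc (Nat.max N J)). lia. }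
  specialize (HP HNa).
  assert (HMN : INR M <= INR N) by (apply le_INR; auto).
  assert (HM1 : 0 < INR M) by (apply lt_0_INR; lia).
  assert (INR (a J) <= eta / 2 * INR N).
  { apply (Rmult_lt_compat_l (INR M)) in HM; [|lra]. rewrite Rinv_r in HM by lra.
    assert (1 * INR (a J) < INR M * (eta / 2 / INR (a J)) * INR (a J)) by (apply Rmult_lt_compat_r; lra).
    replace (INR M * (eta / 2 / INR (a J)) * INR (a J)) with (INR M * (eta / 2)) in H by (field; lra).
    nra. }
  lra.
Qed.

End Final.


Theorem mainTheorem6 (a : nat -> nat) (b : nat -> Z) (beta : R) :
  mild_signature a ->
  ~ is_lim_seq (fun i => dist_int (beta * IZR (b i))) 0%R ->
  filterlim (weyl a b beta) eventually (locally (RtoC 0%R)).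
Proof.
  intros [ha0 [hinc [[L hL] [r [s [hr [hs hrs]]]]]]] Hn.
  destruct (not_lim_exists _ Hn (fun n => dist_int_nonneg _)) as [eps [He Hk]].
  assert (He2 : (eps <= 1/2)%R).
  { destruct (Hk 0%nat) as [k [_ Hk0]]. pose proof (dist_int_le (beta * IZR (b k))). lra. }
  set (delta := (2 - sqrt (2 + 2 * cos (2 * PI * eps)))%R).
  assert (hdelta : (0 < delta)%R) by (apply delta_spec; lra).
  assert (hsav : forall N, exists k, (N <= k)%nat /\ (Cmod (Cplus (RtoC 1) (e (beta * IZR (b k)))) <= 2 - delta)%R).
  { intros N. destruct (Hk N) as [k [HkN Hke]]. exists k. split; auto.
    apply savings_from_dist; auto. }
  apply filterlim_locally. intros eps'.
  destruct (final_bound a b beta ha0 hinc L hL r s hr hs hrs delta hdelta hsav (eps' / 2)) as [M HM].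
  { pose proof (cond_pos eps'). lra. }
  exists (Nat.max M 1). intros n Hn'.
  apply C_NormedModule_mixin_compat1.
  replace (minus (weyl a b beta n) (RtoC 0)) with (weyl a b beta n).
  2: { destruct (weyl a b beta n). unfold minus, plus, opp. simpl. unfold Cplus, Copp, RtoC. simpl. f_equal; ring. }
  change (weyl a b beta n) with (Cmult (RtoC (/ INR n)) (PS a b beta n)).
  rewrite Cmod_mult, Cmod_R.
  assert (Hn0 : (0 < INR n)%R) by (apply lt_0_INR; lia).
  rewrite Rabs_pos_eq by (left; apply Rinv_0_lt_compat; auto).
  specialize (HM n ltac:(lia)).
  pose proof (cond_pos eps').
  apply (Rmult_le_compat_l (/ INR n)) in HM; [|left; apply Rinv_0_lt_compat; auto].
  replace (/ INR n * (eps' / 2 * INR n))%R with (eps' / 2)%R in HM by (field; lra).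
  lra.
Qed.
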